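(* Let $G=(V,E)$ be a finite digraph without loops in which every vertex has at least one incoming arc and at least one outgoing arc, and let $p$ be a positive integer. Then $G$ has a directed path-decomposition of width at most $p-1$ if and only if there is a processing of the queue system $Q_G$ with at most $p$ stack-up places.
   Context: A bin $b$ carries a pallet symbol $\mathit{plt}(b)$. For $G=(V,E)$ with $E=\{e_1,\ldots,e_l\}$, the queue system $Q_G=(q_1,\ldots,q_l)$ consists of sequences $q_i=(b_{2i-1},b_{2i})$ of two new distinct bins with $(\mathit{plt}(b_{2i-1}),\mathit{plt}(b_{2i}))=e_i$. For a list $Q=(q_1,\ldots,q_k)$ of sequences of pairwise distinct bins: a subsequence of $q=(b_1,\ldots,b_n)$ is a suffix $q'=(b_j,\ldots,b_n)$ (possibly empty) and $q-q'=(b_1,\ldots,b_{j-1})$; a configuration is $(Q,Q')$ with $Q'=(q'_1,\ldots,q'_k)$, $q'_j$ a subsequence of $q_j$; pallet $t$ is open in $(Q,Q')$ if some bin for $t$ lies in some $q'_i$ and some bin for $t$ lies in some $q_j-q'_j$. A transformation step removes the first bin of one nonempty $q'_i$; a processing is a sequence of transformation steps from $(Q,Q)$ to the configuration with all sequences empty; it uses at most $p$ stack-up places if every configuration along it has at most $p$ open pallets. A directed path-decomposition of $G$ is a sequence $(X_1,\ldots,X_r)$ of subsets of $V$ with: (1) $\bigcup_i X_i=V$; (2) for each arc $(u,v)$ there are $i\le j$ with $u\in X_i$, $v\in X_j$; (3) if $u\in X_i\cap X_j$, $i\le j$, then $u\in X_l$ for all $i\le l\le j$. Its width is $\max_i|X_i|-1$.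 *)

(* Defs.v *)
From mathcomp Require Import all_boot.
Set Implicit Arguments. Unset Strict Implicit. Unset Printing Implicit Defensive.

Section Queues.
Variables (B : eqType) (V : finType) (plt : B -> V).

(* A configuration (Q, Q') is encoded by the vector c of the numbers of bins
   already removed from each sequence: q'_i = drop c_i q_i, q_i - q'_i = take c_i q_i. *)
Definition config_ok (Q : seq (seq B)) (c : seq nat) : bool :=
  (size c == size Q) && all (fun x => x.1 <= size x.2) (zip c Q).

Definition remaining (Q : seq (seq B)) (c : seq nat) (i : nat) : seq B :=
  drop (nth 0 c i) (nth [::] Q i).
Definition removed (Q : seq (seq B)) (c : seq nat) (i : nat) : seq B :=
  take (nth 0 c i) (nth [::] Q i).

Definition open_pallet (Q : seq (seq B)) (c : seq nat) (t : V) : bool :=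
  has (fun i => has (fun b => plt b == t) (remaining Q c i)) (iota 0 (size Q)) &&
  has (fun j => has (fun b => plt b == t) (removed Q c j)) (iota 0 (size Q)).

Definition nb_open (Q : seq (seq B)) (c : seq nat) : nat :=
  #|[set t | open_pallet Q c t]|.

Definition trans_step (Q : seq (seq B)) (c c' : seq nat) : bool :=
  has (fun i => (nth 0 c i < size (nth [::] Q i)) &&
                (c' == set_nth 0 c i (nth 0 c i).+1)) (iota 0 (size Q)).

Definition processing (Q : seq (seq B)) (cs : seq (seq nat)) : bool :=
  [&& uniq (flatten Q),
      path (trans_step Q) (nseq (size Q) 0) cs,
      all (config_ok Q) (nseq (size Q) 0 :: cs) &
      last (nseq (size Q) 0) cs == map size Q].

Definition uses_at_most (Q : seq (seq B)) (cs : seq (seq nat)) (p : nat) : bool :=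
  all (fun c => nb_open Q c <= p) (nseq (size Q) 0 :: cs).

Definition has_processing (Q : seq (seq B)) (p : nat) : Prop :=
  exists cs, processing Q cs /\ uses_at_most Q cs p.
End Queues.

Section QG.
Variables (V : finType) (E : rel V).

Definition arcs : seq (V * V) := [seq e <- enum {: V * V} | E e.1 e.2].

(* bins are (e, false) and (e, true) for each arc e: fresh and pairwise distinct *)
Definition binG := ((V * V) * bool)%type.
Definition pltG (b : binG) : V := if b.2 then b.1.2 else b.1.1.
Definition QG : seq (seq binG) := [seq [:: (e, false); (e, true)] | e <- arcs].
End QG.

Section DPD.
Variables (V : finType) (E : rel V).

Definition dir_path_decomp (X : seq {set V}) : Prop :=
  [/\ (forall v, exists2 i, i < size X & v \in nth set0 X i),
      (forall u v, E u v -> exists i j, [/\ i <= j, j < size X,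
                     u \in nth set0 X i & v \in nth set0 X j]) &
      (forall u i j l, i <= l -> l <= j -> j < size X ->
         u \in nth set0 X i -> u \in nth set0 X j -> u \in nth set0 X l)].

Definition dpd_width (X : seq {set V}) : nat := (\max_(A <- X) #|A|) - 1.
End DPD.

(* Main.v *)
Require Import Defs.
From mathcomp Require Import all_boot zify.
Set Implicit Arguments. Unset Strict Implicit. Unset Printing Implicit Defensive.
Section Abs.
Variables (V : finType) (pal : nat -> bool -> V) (l m : nat) (C : nat -> nat -> nat).
Hypothesis H0 : forall q, C 0 q = 0.
Hypothesis Hm : forall q, q < l -> C m q = 2.
Hypothesis Hstep : forall k, k < m -> exists i0, forall i,
  C k.+1 i = if i == i0 then (C k i0).+1 else C k i.

Definition op k t :=
  (exists q (b : bool), [/\ q < l, pal q b = t & b < C k q]) /\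
  (exists q (b : bool), [/\ q < l, pal q b = t & C k q <= b]).

Lemma mono k k' q : k <= k' -> k' <= m -> C k q <= C k' q.
Proof.
elim: k' => [|k' IH] kk' k'm; first by move: kk'; rewrite leqn0 => /eqP->.
rewrite leq_eqVlt in kk'; case/orP: kk' => [/eqP->//|kk'].
rewrite ltnS in kk'.
apply: leq_trans (IH kk' (ltnW k'm)) _.
have [i0 Hi0] := Hstep k'm; rewrite Hi0; case: eqP => [->|_] //.
Qed.

Lemma stepS k q : k < m -> C k.+1 q <= (C k q).+1.
Proof. by move=> km; have [i0 Hi0] := Hstep km; rewrite Hi0; case: eqP => [->|_]. Qed.

Variables (w : V) (q1 q2 : nat) (b1 b2 : bool).
Hypotheses (q1l : q1 < l) (q2l : q2 < l) (p1 : pal q1 b1 = w) (p2 : pal q2 b2 = w)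
  (d12 : (q1, b1) != (q2, b2)).

Lemma nb_neq (b b' : bool) : b != b' -> nat_of_bool b != nat_of_bool b'.
Proof. by case: b b' => [] []. Qed.

Lemma other q b : exists q' b', [/\ q' < l, pal q' b' = w & (q', b') != (q, b)].
Proof.
case: (eqVneq (q1, b1) (q, b)) => [e|ne]; last by exists q1, b1.
by exists q2, b2; split => //; rewrite -e eq_sym.
Qed.

Lemma lemA k : k <= m -> forall q b, q < l -> pal q b = w -> b < C k q ->
  exists2 i, i <= k & op i w.
Proof.
elim: k => [|k IH] km q b ql pw hb; first by rewrite H0 in hb.
case: (boolP [exists q : 'I_l, exists b : bool, (pal q b == w) && (b < C k q)]).
  case/existsP => q' /existsP [b' /andP [/eqP pw' hb']].
  by have [i ik oi] := IH (ltnW km) q' b' (ltn_ord q') pw' hb'; exists i => //; apply: leqW.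
move=> /negP hn.
have rem : forall q b, q < l -> pal q b = w -> C k q <= b.
  move=> q' b' ql' pw'; rewrite leqNgt; apply/negP => h; apply: hn.
  by apply/existsP; exists (Ordinal ql'); apply/existsP; exists b'; rewrite /= pw' eqxx.
have [i0 Hi0] := Hstep km.
have qi0 : q = i0.
  by apply/eqP; move: hb; rewrite Hi0; case: eqP => // _ h; have := rem q b ql pw; lia.
subst i0.
have bq : nat_of_bool b = C k q.
  by move: hb; rewrite Hi0 eqxx => h; have := rem q b ql pw; lia.
exists k.+1 => //; split; first by exists q, b; split.
have [q' [b' [ql' pw' ne]]] := other q b.
exists q', b'; split => //; rewrite Hi0.
case: eqP => [eq'|_]; last by apply: rem.
subst q'; have := rem q b' ql pw'; move: ne; rewrite xpair_eqE eqxx /=.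
by move=> /nb_neq /eqP ne' h; lia.
Qed.

Lemma lemB k : k <= m -> forall q b, q < l -> pal q b = w -> C k q <= b ->
  exists j, [/\ k <= j, j <= m & op j w].
Proof.
move=> km; move Hd: (m - k) => d; elim: d k km Hd => [|d IH] k km Hd q b ql pw hb.
  have ekm : k = m by lia.
  by subst k; move: hb; rewrite (Hm ql); case: (b).
have km' : k < m by lia.
case: (boolP [exists q : 'I_l, exists b : bool, (pal q b == w) && (C k.+1 q <= b)]).
  case/existsP => q' /existsP [b' /andP [/eqP pw' hb']].
  have [j [kj jm oj]] := IH k.+1 km' ltac:(lia) q' b' (ltn_ord q') pw' hb'.
  by exists j; split => //; apply: ltnW.
move=> /negP hn.
have rmd : forall q b, q < l -> pal q b = w -> b < C k.+1 q.
  move=> q' b' ql' pw'; rewrite ltnNge; apply/negP => h; apply: hn.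
  by apply/existsP; exists (Ordinal ql'); apply/existsP; exists b'; rewrite /= pw' h eqxx.
have [i0 Hi0] := Hstep km'.
have qi0 : q = i0.
  by apply/eqP; have := rmd q b ql pw; rewrite Hi0; case: eqP => // _ h; lia.
subst i0.
have bq : nat_of_bool b = C k q.
  by have := rmd q b ql pw; rewrite Hi0 eqxx => h; lia.
exists k; split => //; split; last by exists q, b; split.
have [q' [b' [ql' pw' ne]]] := other q b.
exists q', b'; split => //; have := rmd q' b' ql' pw'; rewrite Hi0.
case: eqP => [eq'|_] //.
subst q'; move: ne; rewrite xpair_eqE eqxx /=.
by move=> /nb_neq /eqP ne' h; lia.
Qed.

End Abs.

Section Abs2.
Variables (l m : nat) (C : nat -> nat -> nat).
Hypothesis H0 : forall q, C 0 q = 0.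
Hypothesis Hm : forall q, q < l -> C m q = 2.
Hypothesis Hstep : forall k, k < m -> exists i0, forall i,
  C k.+1 i = if i == i0 then (C k i0).+1 else C k i.

Lemma ivt q : q < l -> exists k, k <= m /\ C k q = 1.
Proof.
move=> ql.
suff: forall d k, k + d = m -> C k q <= 1 -> exists k', k' <= m /\ C k' q = 1.
  by move/(_ m 0); rewrite add0n H0; apply.
elim=> [|d IH] k kd h; first by move: h; rewrite addn0 in kd; rewrite kd Hm.
case: (eqVneq (C k q) 1) => [e|ne]; first by exists k; split => //; lia.
apply: (IH k.+1); first by lia.
have := stepS Hstep q (_ : k < m); lia.
Qed.
End Abs2.

Lemma has_drop2 (T : Type) (f : pred T) c x y :
  has f (drop c [:: x; y]) = ((c <= 0) && f x) || ((c <= 1) && f y).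
Proof. by case: c => [|[|c]] //=; rewrite ?orbF. Qed.

Lemma has_take2 (T : Type) (f : pred T) c x y :
  has f (take c [:: x; y]) = ((0 < c) && f x) || ((1 < c) && f y).
Proof. by case: c => [|[|c]] //=; rewrite ?orbF. Qed.

Section Conc.
Variables (V : finType) (E : rel V) (d : V * V).
Local Notation l := (size (arcs E)).
Definition pal q (b : bool) : V :=
  if b then (nth d (arcs E) q).2 else (nth d (arcs E) q).1.

Lemma size_QG : size (QG E) = l. Proof. by rewrite size_map. Qed.

Lemma nth_QG q : q < l ->
  nth [::] (QG E) q = [:: (nth d (arcs E) q, false); (nth d (arcs E) q, true)].
Proof. by move=> ql; rewrite /QG (nth_map d). Qed.

Lemma open_char c t : open_pallet (@pltG V) (QG E) c t <->
  (exists q (b : bool), [/\ q < l, pal q b = t & b < nth 0 c q]) /\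
  (exists q (b : bool), [/\ q < l, pal q b = t & nth 0 c q <= b]).
Proof.
rewrite /open_pallet /remaining /removed size_QG; split.
  case/andP => /hasP [q]; rewrite mem_iota => /andP [_ ql].
  rewrite nth_QG // has_drop2 /pltG /= => h1.
  case/hasP => [q']; rewrite mem_iota => /andP [_ ql'].
  rewrite nth_QG // has_take2 /pltG /= => h2.
  split.
    by case/orP: h2 => /andP [h /eqP e]; [exists q', false | exists q', true].
  by case/orP: h1 => /andP [h /eqP e]; [exists q, false | exists q, true].
move=> [[q [b [ql pq hq]]] [q' [b' [ql' pq' hq']]]].
apply/andP; split; apply/hasP.
  exists q'; first by rewrite mem_iota.
  rewrite nth_QG // has_drop2 /pltG /=; move: pq' hq'; rewrite /pal.
  by case: (b') => /= -> ->; rewrite eqxx ?orbT.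
exists q; first by rewrite mem_iota.
rewrite nth_QG // has_take2 /pltG /=; move: pq hq; rewrite /pal.
by case: (b) => /= -> ->; rewrite eqxx ?orbT.
Qed.

Lemma arc_pos u v : E u v -> exists2 q, q < l & nth d (arcs E) q = (u, v).
Proof.
move=> euv; have mem : (u, v) \in arcs E by rewrite mem_filter /= euv mem_enum.
by exists (index (u, v) (arcs E)); [rewrite index_mem | rewrite nth_index].
Qed.

Lemma arc_E q : q < l -> E (nth d (arcs E) q).1 (nth d (arcs E) q).2.
Proof.
by move=> ql; have := mem_nth d ql; rewrite mem_filter => /andP [].
Qed.

End Conc.

Lemma pdiff (q q' : nat) : (q, false) != (q', true).
Proof. by rewrite xpair_eqE andbF. Qed.

Lemma two_pos (V : finType) (E : rel V) d w :
  (exists u, E u w) -> (exists x, E w x) ->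
  exists q1 q2, [/\ q1 < size (arcs E), q2 < size (arcs E),
     pal E d q1 false = w & pal E d q2 true = w].
Proof.
move=> [u euw] [x ewx].
have [q1 q1l e1] := arc_pos d ewx; have [q2 q2l e2] := arc_pos d euw.
by exists q1, q2; rewrite /pal e1 e2.
Qed.

Theorem proc_dpd (V : finType) (E : rel V) (d : V * V) (p : nat) :
  (forall v, exists u, E u v) -> (forall v, exists w, E v w) ->
  has_processing (@pltG V) (QG E) p ->
  exists X : seq {set V}, dir_path_decomp E X /\ dpd_width X <= p - 1.
Proof.
move=> in_h out_h [cs [/and4P [_ hpath hok /eqP hlast] huse]].
pose C k q := nth 0 (nth [::] (nseq (size (QG E)) 0 :: cs) k) q.
pose m := size cs.
have H0 : forall q, C 0 q = 0 by move=> q; rewrite /C /= nth_nseq; case: ifP.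
have Hm : forall q, q < size (arcs E) -> C m q = 2.
  move=> q ql; rewrite /C /m.
  have -> : nth [::] (nseq (size (QG E)) 0 :: cs) (size cs)
      = last (nseq (size (QG E)) 0) cs.
    by rewrite -[RHS]/(last [::] (nseq (size (QG E)) 0 :: cs)) -nth_last.
  by rewrite hlast (nth_map [::]) ?size_QG // (nth_QG d).
have Hstep : forall k, k < m -> exists i0, forall i,
    C k.+1 i = if i == i0 then (C k i0).+1 else C k i.
  move=> k km; have := pathP [::] hpath k km.
  rewrite /trans_step => /hasP [i0 _ /andP [_ /eqP e]].
  by exists i0 => i; rewrite /C /= e nth_set_nth.
pose X := [seq [set t | open_pallet (@pltG V) (QG E) c t]
            | c <- nseq (size (QG E)) 0 :: cs].
have sX : size X = m.+1 by rewrite size_map.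
have memX : forall k t, k <= m -> (t \in nth set0 X k) <-> op (pal E d) (size (arcs E)) C k t.
  move=> k t km; rewrite (nth_map [::]) /=; last by rewrite ltnS.
  by rewrite inE; apply: open_char.
exists X; split; last first.
  rewrite /dpd_width; apply: leq_sub2r; apply/bigmax_leqP_seq => A /mapP [c cin ->] _.
  by move/allP: huse => /(_ c cin).
split.
- move=> v; have [q1 [q2 [q1l q2l e1 e2]]] := two_pos d (in_h v) (out_h v).
  have [j [_ jm oj]] := lemB Hm Hstep q1l q2l e1 e2 (pdiff _ _) (leq0n m) q1l e1
    (eq_leq (H0 q1)).
  by exists j; [rewrite sX ltnS | apply/memX].
- move=> u v euv; have [q ql e] := arc_pos d euv.
  have [k [km ck]] := ivt H0 Hm Hstep ql.
  have [q1 [q2 [q1l q2l e1 e2]]] := two_pos d (in_h u) (out_h u).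
  have [q3 [q4 [q3l q4l e3 e4]]] := two_pos d (in_h v) (out_h v).
  have pu : pal E d q false = u by rewrite /pal e.
  have pv : pal E d q true = v by rewrite /pal e.
  have s1 : nat_of_bool false < C k q by rewrite ck.
  have s2 : C k q <= nat_of_bool true by rewrite ck.
  have [i ik oi] := lemA H0 Hstep q1l q2l e1 e2 (pdiff _ _) km ql pu s1.
  have [j [kj jm oj]] := lemB Hm Hstep q3l q4l e3 e4 (pdiff _ _) km ql pv s2.
  exists i, j; split; [exact: leq_trans ik kj | by rewrite sX ltnS | |].
  + by apply/memX => //; apply: leq_trans ik km.
  + by apply/memX.
- move=> u i j l' il lj; rewrite sX ltnS => jm.
  have lm : l' <= m by apply: leq_trans lj jm.
  have im : i <= m by apply: leq_trans il lm.
  move=> /(memX _ _ im) [[q [b [ql pq hq]]] _] /(memX _ _ jm) [_ [q' [b' [ql' pq' hq']]]].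
  apply/memX => //; split.
    by exists q, b; split => //; apply: leq_trans hq (mono Hstep _ il lm).
  by exists q', b'; split => //; apply: leq_trans (mono Hstep _ lj jm) hq'.
Qed.

Lemma last_iota m k : last m (iota m.+1 k) = m + k.
Proof. by elim: k m => [|k IH] m //=; rewrite ?addn0 // IH addnS. Qed.

Lemma path_map_iota (T : Type) (f : nat -> T) (r : rel T) N m :
  (forall k, m <= k -> k < m + N -> r (f k) (f k.+1)) ->
  path r (f m) (map f (iota m.+1 N)).
Proof.
elim: N m => [|N IH] m h //=; apply/andP; split; first by apply: h; lia.
by apply: IH => k h1 h2; apply: h; lia.
Qed.

Section Constr.
Variables (V : finType) (E : rel V) (d : V * V) (X : seq {set V}) (p : nat).
Hypothesis hX : dir_path_decomp E X.
Hypothesis hw : \max_(A <- X) #|A| <= p.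
Local Notation l := (size (arcs E)).
Local Notation n := (size X).
Local Notation pl := (pal E d).

Definition av v := find (fun A : {set V} => v \in A) X.
Definition fz v := find (fun A : {set V} => v \in A) (rev X).
Definition zv v := n.-1 - fz v.

Lemma hasX v : has (fun A : {set V} => v \in A) X.
Proof.
case: hX => h1 _ _; have [i il vi] := h1 v.
by apply/hasP; exists (nth set0 X i) => //; apply: mem_nth.
Qed.

Lemma a_lt v : av v < n. Proof. by have := hasX v; rewrite has_find. Qed.
Lemma in_a v : v \in nth set0 X (av v). Proof. exact: (nth_find set0 (hasX v)). Qed.
Lemma a_min v i : v \in nth set0 X i -> av v <= i.
Proof.
move=> vi; rewrite leqNgt; apply/negP => h.
by have := before_find set0 h; rewrite vi.
Qed.
Lemma fz_lt v : fz v < n.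
Proof. by have := hasX v; rewrite -has_rev has_find size_rev. Qed.
Lemma z_lt v : zv v < n.
Proof. have := fz_lt v; rewrite /zv; lia. Qed.
Lemma in_z v : v \in nth set0 X (zv v).
Proof.
have h := fz_lt v.
have -> : zv v = n - (fz v).+1 by rewrite /zv; lia.
rewrite -nth_rev //; apply: (nth_find set0 (a := fun A : {set V} => v \in A)).
by rewrite has_rev hasX.
Qed.
Lemma z_max v i : i < n -> v \in nth set0 X i -> i <= zv v.
Proof.
move=> il vi.
have : fz v <= n - i.+1.
  rewrite leqNgt; apply/negP => h.
  have := before_find set0 h; rewrite nth_rev; last by lia.
  have -> : n - (n - i.+1).+1 = i by lia.
  by rewrite vi.
rewrite /zv; lia.
Qed.
Lemma a_le_z v : av v <= zv v.
Proof. exact: z_max (a_lt v) (in_a v). Qed.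
Lemma in_mid v s : av v <= s -> s <= zv v -> v \in nth set0 X s.
Proof.
case: hX => _ _ h3 h1 h2; apply: (h3 v (av v) (zv v)) => //; [exact: z_lt | exact: in_a | exact: in_z].
Qed.
Lemma arc_az q : q < l -> av (pl q false) <= zv (pl q true).
Proof.
move=> ql; case: hX => _ h2 _; have [i [j [ij jn ui vj]]] := h2 _ _ (arc_E d ql).
by apply: leq_trans (a_min ui) (leq_trans ij (z_max jn vj)).
Qed.

Definition stage q (b : bool) := if b then zv (pl q true) else av (pl q false).
Definition key q (b : bool) := (2 * stage q b + b) * l + q.

Lemma key_div q b : q < l -> key q b %/ l = 2 * stage q b + b.
Proof. by move=> ql; rewrite /key divnMDl ?(divn_small ql) ?addn0 //; lia. Qed.
Lemma key_mod q b : q < l -> key q b %% l = q.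
Proof. by move=> ql; rewrite /key modnMDl modn_small. Qed.
Lemma key_stage q b : q < l -> key q b %/ l %/ 2 = stage q b.
Proof.
move=> ql; rewrite key_div // mulnC divnMDl // divn_small ?addn0 //; by case: (b).
Qed.
Lemma key_inj q q' b b' : q < l -> q' < l -> key q b = key q' b' -> q = q' /\ b = b'.
Proof.
move=> ql ql' e; have eq : q = q' by rewrite -(key_mod b ql) -(key_mod b' ql') e.
split => //; have := key_div b ql; rewrite e key_div // eq.
by case: (b) (b') => [] [] //=; lia.
Qed.
Lemma key_lt q : q < l -> key q false < key q true.
Proof.
move=> ql; rewrite /key ltn_add2r ltn_pmul2r; last by lia.
have := arc_az ql; rewrite /stage /=; lia.
Qed.
Lemma stage_mono q q' b b' : q < l -> q' < l -> key q b <= key q' b' -> stage q b <= stage q' b'.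
Proof.
by move=> ql ql' h; rewrite -(key_stage b ql) -(key_stage b' ql'); do 2 apply: leq_div2r.
Qed.
Lemma stage_in q b t : pl q b = t -> av t <= stage q b /\ stage q b <= zv t.
Proof. by case: b => <-; rewrite /stage /= ?leqnn a_le_z. Qed.
Lemma stage_lt q b : stage q b < n.
Proof. by case: b; rewrite /stage ?z_lt ?a_lt. Qed.

Definition T q (b : bool) := #|[set P : 'I_l * bool | key P.1 P.2 < key q b]|.

Lemma T_monoW q b q' b' : key q b <= key q' b' -> T q b <= T q' b'.
Proof.
move=> h; apply: subset_leq_card; apply/subsetP => P; rewrite !inE => h'.
exact: leq_trans h' h.
Qed.
Lemma T_mono q b q' b' : key q b < key q' b' -> q < l -> T q b < T q' b'.
Proof.
move=> h ql; apply: proper_card; apply/properP; split.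
  by apply/subsetP => P; rewrite !inE => h'; apply: ltn_trans h' h.
by exists (Ordinal ql, b); rewrite !inE /= ?h // ltnn.
Qed.
Lemma T_inj q b q' b' : q < l -> q' < l -> T q b = T q' b' -> q = q' /\ b = b'.
Proof.
move=> ql ql' e; case: (ltngtP (key q b) (key q' b')) => h.
- by have := T_mono h ql; rewrite e ltnn.
- by have := T_mono h ql'; rewrite e ltnn.
- exact: key_inj.
Qed.
Lemma T_lt q b : q < l -> T q b < 2 * l.
Proof.
move=> ql; have -> : 2 * l = #|[set: 'I_l * bool]| by rewrite cardsT card_prod card_ord card_bool mulnC.
apply: proper_card; apply/properP; split; first exact: subsetT.
by exists (Ordinal ql, b); rewrite !inE /= ?ltnn.
Qed.
Lemma T_surj k : k < 2 * l -> exists q b, q < l /\ T q b = k.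
Proof.
move=> kl.
pose f := fun P : 'I_l * bool => Ordinal (T_lt P.2 (ltn_ord P.1)) : 'I_(2 * l).
have finj : injective f.
  move=> [x b] [y b'] /(congr1 val) /= e.
  have [e1 e2] := T_inj (ltn_ord x) (ltn_ord y) e.
  by rewrite e2; congr (_, _); apply: val_inj.
have cle : #|'I_(2 * l)| <= #|{: 'I_l * bool}|.
  by rewrite card_prod !card_ord card_bool mulnC.
have [g fK gK] := inj_card_bij finj cle.
move: (gK (Ordinal kl)); case: (g (Ordinal kl)) => x b /(congr1 val) /= e.
by exists x, b; split.
Qed.

Definition cfg k := mkseq (fun q => (T q false < k) + (T q true < k)) l.

Lemma T_ft q : q < l -> T q false < T q true.
Proof. by move=> ql; apply: T_mono (key_lt ql) ql. Qed.

Lemma rmd q (b : bool) k : q < l -> (b < nth 0 (cfg k) q) = (T q b < k).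
Proof.
move=> ql; rewrite nth_mkseq //; have := T_ft ql.
by case: b; case: (ltnP (T q false) k); case: (ltnP (T q true) k) => //= *; lia.
Qed.
Lemma remn q (b : bool) k : q < l -> (nth 0 (cfg k) q <= b) = (k <= T q b).
Proof. by move=> ql; rewrite leqNgt rmd // -leqNgt. Qed.


Lemma cfg0 : cfg 0 = nseq l 0.
Proof.
apply: (eq_from_nth (x0 := 0)); rewrite size_mkseq ?size_nseq // => i il.
by rewrite nth_mkseq // nth_nseq il.
Qed.

Lemma cfg_step k : k < 2 * l -> trans_step (QG E) (cfg k) (cfg k.+1).
Proof.
move=> kl; have [q [b [ql Tq]]] := T_surj kl.
apply/hasP; exists q; first by rewrite size_QG mem_iota.
rewrite (nth_QG d ql) /=; apply/andP; split.
  rewrite /cfg nth_mkseq //; case: (b) Tq => /= ->; rewrite ltnn ?addn0;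
  first [by case: (T q true < k) | by case: (T q false < k)].
apply/eqP; rewrite /cfg; apply: (eq_from_nth (x0 := 0)).
  by rewrite size_set_nth !size_mkseq; apply/esym/maxn_idPr.
move=> i; rewrite size_mkseq => il; rewrite nth_set_nth /=.
have ft := T_ft ql.
case: eqP => [->|ne]; rewrite !nth_mkseq //.
  case: (b) Tq => /= Tq; rewrite Tq ltnSn ltnn.
    have e1 : T q false < k.+1 by lia.
    have e2 : T q false < k by lia.
    by rewrite e1 e2.
  have e1 : (T q true < k.+1) = false by apply/negbTE; rewrite -leqNgt; lia.
  have e2 : (T q true < k) = false by apply/negbTE; rewrite -leqNgt; lia.
  by rewrite e1 e2.
have h1 : T i false != k.
  apply/eqP => e; have e' : T i false = T q b by rewrite e Tq.
  by have [e1 _] := T_inj il ql e'.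
have h2 : T i true != k.
  apply/eqP => e; have e' : T i true = T q b by rewrite e Tq.
  by have [e1 _] := T_inj il ql e'.
have e1 : (T i false < k.+1) = (T i false < k) by rewrite ltnS leq_eqVlt (negbTE h1).
have e2 : (T i true < k.+1) = (T i true < k) by rewrite ltnS leq_eqVlt (negbTE h2).
by rewrite e1 e2.
Qed.


Lemma cfg_ok k : config_ok (QG E) (cfg k).
Proof.
rewrite /config_ok /cfg size_mkseq size_QG eqxx /=.
apply/(all_nthP (0, [::])) => i; rewrite size_zip size_mkseq size_QG minnn => il.
rewrite nth_zip ?size_mkseq ?size_QG //= nth_mkseq // (nth_QG d il) /=.
by case: (T i false < k); case: (T i true < k).
Qed.

Lemma cfg_full : cfg (2 * l) = map size (QG E).
Proof.
apply: (eq_from_nth (x0 := 0)); first by rewrite /cfg size_mkseq size_map size_QG.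
move=> i; rewrite /cfg size_mkseq => il.
by rewrite nth_mkseq // (nth_map [::]) ?size_QG // (nth_QG d il) /= !T_lt.
Qed.

Lemma cfg_bound k : k <= 2 * l -> nb_open (@pltG V) (QG E) (cfg k) <= p.
Proof.
move=> kl.
have n0 : 0 < n by have := a_lt d.1; lia.
suff [s sn sub] : exists2 s, s < n &
    [set t | open_pallet (@pltG V) (QG E) (cfg k) t] \subset nth set0 X s.
  apply: leq_trans (subset_leq_card sub) _; apply: leq_trans hw.
  exact: (leq_bigmax_seq (F := fun A : {set V} => #|A|) (P := xpredT) _ (mem_nth set0 sn) isT).
case: k kl => [|k] kl.
  exists 0 => //; apply/subsetP => t; rewrite inE => /(@open_char _ _ d _ _) [[q [b [ql _ h]]] _].
  by rewrite rmd in h.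
have [q0 [b0 [q0l T0]]] := T_surj (kl : k < 2 * l).
exists (stage q0 b0); first exact: stage_lt.
apply/subsetP => t; rewrite inE => /(@open_char _ _ d _ _) [[q [b [ql pq h]]] [q' [b' [ql' pq' h']]]].
rewrite rmd // in h; rewrite remn // in h'.
have k1 : key q b <= key q0 b0.
  by rewrite leqNgt; apply/negP => hh; have := T_mono hh q0l; lia.
have k2 : key q0 b0 < key q' b'.
  by rewrite ltnNge; apply/negP => hh; have := T_monoW hh; lia.
have [a1 _] := stage_in pq; have [_ z2] := stage_in pq'.
apply: in_mid.
  exact: leq_trans a1 (stage_mono ql q0l k1).
exact: leq_trans (stage_mono q0l ql' (ltnW k2)) z2.
Qed.

Theorem dpd_proc : has_processing (@pltG V) (QG E) p.
Proof.
exists [seq cfg k | k <- iota 1 (2 * l)]; split.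
  apply/and4P; split.
  - have -> : flatten (QG E) = [seq (e, b) | e <- arcs E, b <- [:: false; true]] by [].
    apply: allpairs_uniq => //; first exact: filter_uniq (enum_uniq _).
    by move=> [? ?] [? ?] _ _.
  - rewrite size_QG -cfg0; apply: path_map_iota => k _ hk; apply: cfg_step; lia.
  - apply/allP => c; rewrite inE size_QG => /orP [/eqP -> | /mapP [k _ ->]].
      by rewrite -cfg0; apply: cfg_ok.
    exact: cfg_ok.
  - by rewrite size_QG -cfg0 last_map last_iota add0n cfg_full.
rewrite /uses_at_most; apply/allP => c; rewrite inE size_QG => /orP [/eqP -> | /mapP [k kin ->]].
  by rewrite -cfg0; apply: cfg_bound.
by apply: cfg_bound; move: kin; rewrite mem_iota; lia.
Qed.

End Constr.

Theorem lemma4 (V : finType) (E : rel V) (p : nat) :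
  (forall v, ~~ E v v) ->
  (forall v, exists u, E u v) ->
  (forall v, exists w, E v w) ->
  0 < p ->
  (exists X : seq {set V}, dir_path_decomp E X /\ dpd_width X <= p - 1)
  <-> has_processing (@pltG V) (QG E) p.
Proof.
move=> _ in_h out_h p0.
case: (pickP (@predT V)) => [v0 _ | Vemp].
  split; last exact: proc_dpd (v0, v0) p in_h out_h.
  move=> [X [hX hw]]; apply: (@dpd_proc V E (v0, v0) X p hX).
  by move: hw; rewrite /dpd_width; lia.
have arcs0 : arcs E = [::].
  by case e: (arcs E) => [|x s] //; have := Vemp x.1.
have QG0 : QG E = [::] by rewrite /QG arcs0.
have V0 : #|V| = 0 by apply: eq_card0 => v; exact: Vemp v.
split => _.
  rewrite QG0; exists [::]; split => //.
  rewrite /uses_at_most /= andbT /nb_open.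
  by apply: leq_trans (max_card _) _; rewrite V0.
exists [::]; split; last by rewrite /dpd_width big_nil.
split.
- by move=> v; have := Vemp v.
- by move=> u; have := Vemp u.
- by move=> u; have := Vemp u.
Qed.
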